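(* Let $X$ be a set, $\mathcal C\subseteq\mathcal P(X)$ closed under intersections (if $(K_i)_{i\in I}\subseteq\mathcal C$ then $\bigcap_{i\in I}K_i\in\mathcal C$), and $T:\mathcal C\to\mathcal C$ an order reversing quasi involution on $\mathcal C$. Fix $M_0\in\mathcal C$ and let $\mathcal C_0=\{K\cap M_0: K\in\mathcal C\}$. Then $\mathcal C_0\subseteq\mathcal C$, and the map $S:\mathcal C_0\to\mathcal C_0$ defined by $SK=TK\cap M_0$ is an order reversing quasi involution on $\mathcal C_0$.
   Context: $\mathcal P(X)$ is the power set of $X$. For $\mathcal D\subseteq\mathcal P(X)$, a map $T:\mathcal D\to\mathcal D$ is an order reversing quasi involution on $\mathcal D$ if for all $K,L\in\mathcal D$: (i) $K\subseteq TTK$, and (ii) $L\subseteq K$ implies $TK\subseteq TL$. *)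

(* Defs.v *)
From mathcomp Require Import all_boot.
From mathcomp Require Import classical_sets.
Set Implicit Arguments. Unset Strict Implicit. Unset Printing Implicit Defensive.
Local Open Scope classical_set_scope.

Definition closed_under_intersections (X : Type) (C : set (set X)) : Prop :=
  forall (I : Type) (F : I -> set X),
    (forall i, C (F i)) -> C (\bigcap_(i in [set: I]) F i).

Definition maps_into (X : Type) (D : set (set X)) (T : set X -> set X) : Prop :=
  forall K, D K -> D (T K).

Definition order_reversing_quasi_involution (X : Type) (D : set (set X))
    (T : set X -> set X) : Prop :=
  maps_into D T /\
  (forall K, D K -> K `<=` T (T K)) /\
  (forall K L, D K -> D L -> L `<=` K -> T K `<=` T L).

(* Main.v *)
Require Import Defs.
From mathcomp Require Import all_boot.
From mathcomp Require Import classical_sets.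
Local Open Scope classical_set_scope.

Lemma inter2 (X : Type) (C : set (set X)) (hC : closed_under_intersections C)
  (A B : set X) : C A -> C B -> C (A `&` B).
Proof.
move=> hA hB.
have := hC bool (fun b => if b then A else B) (fun b => if b as b0 return C (if b0 then A else B) then hA else hB).
congr C; rewrite eqEsubset; split => x.
- move=> H; split; [exact: (H true I) | exact: (H false I)].
- by move=> [Ha Hb] [] _.
Qed.

Theorem proposition8p13 (X : Type) (C : set (set X)) (T : set X -> set X)
  (hC : closed_under_intersections C)
  (hT : order_reversing_quasi_involution C T)
  (M0 : set X) (hM0 : C M0) :
  let C0 := [set K `&` M0 | K in C] in
  let S := fun K : set X => T K `&` M0 in
  C0 `<=` C /\ order_reversing_quasi_involution C0 S.
Proof.
move=> C0 S.
case: hT => [hmap [hinv hrev]].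
have sub : C0 `<=` C by move=> K [K' hK' <-]; exact: inter2.
split => //.
split; [|split].
- move=> K hK; exists (T K) => //; exact: hmap (sub _ hK).
- move=> K hK x hx.
  have hKC := sub _ hK.
  have hKM : K `<=` M0 by case: hK => K' _ <- y [].
  split; last exact: hKM.
  have hTK := hmap _ hKC.
  have hS : C (T K `&` M0) by exact: inter2.
  apply: (hrev (T K) (T K `&` M0) hTK hS); first by move=> y [].
  exact: hinv.
- move=> K L hK hL hLK x [hx hm]; split => //.
  exact: (hrev K L (sub _ hK) (sub _ hL) hLK).
Qed.
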